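(* Let $U$ be a coherent $P$-ultrafilter on the Cohen algebra $\mathbb{C}_\omega$ such that $a_i\notin U$ for all $i<\omega$. Then for every strictly increasing function $\varphi\colon\omega\to\omega$, the set $C_\varphi\cap U$ is cofinal in $U$, i.e. for every $u\in U$ there is $c\in C_\varphi\cap U$ with $c\le u$.
   Context: $\mathbb{C}_\omega$ is the Cohen algebra, the unique atomless complete Boolean algebra with a countable dense subalgebra. Fix an enumeration $\{d_k:k<\omega\}$ of a countable dense subalgebra with $d_0=\mathbb{0}$, and fix an infinite maximal antichain $\{a_i:i<\omega\}$ of $\mathbb{C}_\omega$. For a strictly increasing $\varphi\colon\omega\to\omega$, $C_\varphi\subseteq\mathbb{C}_\omega$ is the set of all $c$ for which there is a strictly increasing sequence $\langle m_j:j<\omega\rangle$ with $\{a_i\wedge c: i<\varphi(m_j)\}\subseteq\{d_k: k<\varphi(m_j)\}$ for all $j<\omega$. An ultrafilter $U$ on a complete c.c.c. Boolean algebra $\mathbb{B}$ is a coherent $P$-ultrafilter if for every maximal antichain $P$ of $\mathbb{B}$ and every family $\{X_n:n<\omega\}$ of subsets of $P$ with $\bigvee X_n\in U$ for all $n$, there exists $Y\subseteq P$ with $\bigvee Y\in U$ and $Y\setminus X_n$ finite for every $n<\omega$. *)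

(* Defs.v *)
From HB Require Import structures.
From mathcomp Require Import all_boot all_order.
From mathcomp Require Import boolp classical_sets cardinality.
Set Implicit Arguments. Unset Strict Implicit. Unset Printing Implicit Defensive.
Import Order.TTheory.
Local Open Scope order_scope.

(* Boolean algebras are MathComp's complemented distributive lattices with
   top and bottom: ctbDistrLatticeType. *)
Section BA.
Context {disp : Order.disp_t} {T : ctbDistrLatticeType disp}.

Definition is_sup (S : set T) (s : T) : Prop :=
  (forall x, S x -> x <= s) /\ (forall y, (forall x, S x -> x <= y) -> s <= y).

Definition complete_BA : Prop := forall S : set T, exists s, is_sup S s.

Definition atomless : Prop :=
  forall x : T, x != \bot -> exists y, \bot < y /\ y < x.

Definition subalgebra (D : set T) : Prop :=
  D \bot /\ D \top /\ (forall x y, D x -> D y -> D (Order.meet x y)) /\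
  (forall x y, D x -> D y -> D (Order.join x y)) /\
  (forall x, D x -> D (Order.compl x)).

Definition dense (D : set T) : Prop :=
  forall x : T, x != \bot -> exists2 y, D y & \bot < y /\ y <= x.

Definition max_antichain (P : set T) : Prop :=
  (forall p, P p -> p != \bot) /\
  (forall p q, P p -> P q -> p <> q -> Order.meet p q = \bot) /\
  (forall x, x != \bot -> exists2 p, P p & Order.meet x p != \bot).

Definition ultrafilter (U : set T) : Prop :=
  U \top /\ ~ U \bot /\
  (forall x y, U x -> x <= y -> U y) /\
  (forall x y, U x -> U y -> U (Order.meet x y)) /\
  (forall x, U x \/ U (Order.compl x)).

Definition join_in (U : set T) (X : set T) : Prop :=
  exists s, is_sup X s /\ U s.

Definition coherent_P_ultrafilter (U : set T) : Prop :=
  ultrafilter U /\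
  forall (P : set T) (X : nat -> set T),
    max_antichain P ->
    (forall n, (forall x, X n x -> P x) /\ join_in U (X n)) ->
    exists Y : set T,
      (forall y, Y y -> P y) /\ join_in U Y /\
      forall n, finite_set (fun y => Y y /\ ~ X n y).

(* C_phi, for the enumeration d of the dense subalgebra and antichain a *)
Definition C_phi (d a : nat -> T) (phi : nat -> nat) : set T :=
  fun c => exists m : nat -> nat, (forall j, m j < m j.+1)%N /\
    forall j i, (i < phi (m j))%N ->
      exists2 k, (k < phi (m j))%N & Order.meet (a i) c = d k.

End BA.

(* Main.v *)
Require Import Defs.
From HB Require Import structures.
From mathcomp Require Import all_boot all_order.
From mathcomp Require Import boolp classical_sets cardinality.
From mathcomp Require Import zify.
Import Order.TTheory Order.CTBDistrLatticeTheory.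
Set Implicit Arguments. Unset Strict Implicit.
Local Open Scope order_scope.

Lemma disjW {disp : Order.disp_t} {T : ctbDistrLatticeType disp} (x y p : T) :
  x <= Order.compl y -> p <= y -> Order.meet x p = \bot.
Proof.
move=> h1 h2; apply/eqP; rewrite -lex0.
apply: le_trans (leI2 h1 h2) _; by rewrite meetCx.
Qed.

Lemma sup_seq {disp : Order.disp_t} {T : ctbDistrLatticeType disp} (s : seq T) :
  is_sup [set` s]%classic (foldr Order.join \bot s).
Proof.
elim: s => [|x s [IH1 IH2]] /=.
  split; first by move=> x.
  by move=> y _; exact: le0x.
split.
  move=> z; rewrite /= inE => /orP [/eqP -> | zs]; first exact: leUl.
  by apply: le_trans (IH1 z zs) _; exact: leUr.
move=> y hy; rewrite leUx; apply/andP; split.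
  by apply: hy; rewrite /= inE eqxx.
by apply: IH2 => z zs; apply: hy; rewrite /= inE zs orbT.
Qed.

Lemma sup_unique {disp : Order.disp_t} {T : ctbDistrLatticeType disp} (S : set T) s s' :
  is_sup S s -> is_sup S s' -> s = s'.
Proof.
move=> [h1 h2] [h1' h2']; apply: le_anti; rewrite h2 //= h2' //.
Qed.

Lemma sup_range {disp : Order.disp_t} {T : ctbDistrLatticeType disp} (d : nat -> T) (S : set T) s :
  subalgebra (range d) -> finite_set S -> (forall x, S x -> range d x) ->
  is_sup S s -> range d s.
Proof.
move=> [H0 [_ [_ [HU _]]]] /finite_seqP [l ->] Hsub Hs.
rewrite (sup_unique Hs (sup_seq l)).
elim: l Hsub {Hs} => [|x l IH] Hsub /=; first exact: H0.
apply: HU; first by apply: Hsub; rewrite /= inE eqxx.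
by apply: IH => z zs; apply: Hsub; rewrite /= inE zs orbT.
Qed.

Local Open Scope nat_scope.

Lemma sinc_lt (f : nat -> nat) : (forall n, f n < f n.+1) -> forall m n, m < n -> f m < f n.
Proof.
move=> hf m; elim=> [//|n IH]; rewrite ltnS leq_eqVlt => /orP [/eqP -> //|/IH h].
exact: ltn_trans h (hf n).
Qed.

Lemma sinc_le (f : nat -> nat) : (forall n, f n < f n.+1) -> forall m n, m <= n -> f m <= f n.
Proof.
move=> hf m n; rewrite leq_eqVlt => /orP [/eqP -> //|h]; exact/ltnW/sinc_lt.
Qed.

Lemma sinc_id (f : nat -> nat) : (forall n, f n < f n.+1) -> forall n, n <= f n.
Proof. move=> hf; elim=> [//|n IH]; exact: leq_ltn_trans IH (hf n). Qed.

Fixpoint gmax (f : nat -> nat) i := if i is j.+1 then maxn (gmax f j) (f i) else f 0.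

Lemma gmax_ge f i : f i <= gmax f i.
Proof. case: i => [//|i] /=; exact: leq_maxr. Qed.

Lemma gmax_mono f i j : i <= j -> gmax f i <= gmax f j.
Proof.
move=> /subnK <-; elim: (j - i) => [//|k IH].
rewrite addSn /=; exact: leq_trans IH (leq_maxl _ _).
Qed.

Fixpoint nsq (g : nat -> nat) (phi : nat -> nat) t :=
  if t is s.+1 then nsq g phi s + g (phi (nsq g phi s)) + 1 else 0.

Fixpoint greedy (G : nat -> Prop) (R : nat -> nat -> Prop) n : seq nat :=
  if n is m.+1 then
    (if `[< G m /\ forall j, j \in greedy G R m -> R j m >] then m :: greedy G R m
     else greedy G R m)
  else [::].

Lemma greedyE G R n k : k \in greedy G R n =
  (k < n) && `[< G k /\ forall j, j \in greedy G R k -> R j k >].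
Proof.
elim: n => [//|n IH] /=.
case: ifP => h; rewrite ?inE IH ltnS (leq_eqVlt k n);
  case: eqP => [->|ne] //=; rewrite ?ltnn ?h //.
Qed.

Local Open Scope order_scope.

Fixpoint nA {disp : Order.disp_t} {T : ctbDistrLatticeType disp} (a : nat -> T) n : T :=
  if n is m.+1 then Order.meet (nA a m) (Order.compl (a m)) else \top.

Lemma nA_le {disp : Order.disp_t} {T : ctbDistrLatticeType disp} (a : nat -> T) n j :
  (j < n)%N -> nA a n <= Order.compl (a j).
Proof.
elim: n => [//|n IH]; rewrite ltnS leq_eqVlt => /orP [/eqP ->|h] /=.
  exact: leIr.
exact: le_trans (leIl _ _) (IH h).
Qed.

Lemma split0 {disp : Order.disp_t} {T : ctbDistrLatticeType disp} (z u : T) :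
  Order.meet z u = \bot -> Order.meet z (Order.compl u) = \bot -> z = \bot.
Proof.
move=> /eqP h1 /eqP h2; rewrite disj_leC in h1; rewrite disj_leC complK in h2.
apply/eqP; rewrite -lex0; apply: le_trans (_ : Order.meet u (Order.compl u) <= _).
  by rewrite lexI h1 h2.
by rewrite meetxC.
Qed.

Unset Implicit Arguments.
Theorem mainTheorem10 (disp : Order.disp_t) (T : ctbDistrLatticeType disp)
    (d : nat -> T) (a : nat -> T) (U : set T)
    (HT_complete : complete_BA (T := T))
    (HT_atomless : atomless (T := T))
    (Hd_sub : subalgebra (range d))
    (Hd_dense : dense (range d))
    (Hd0 : d 0%N = \bot)
    (Ha_inj : injective a)
    (Ha_max : max_antichain (range a))
    (HU : coherent_P_ultrafilter U)
    (HUa : forall i, ~ U (a i)) :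
  forall phi : nat -> nat, (forall n, phi n < phi n.+1)%N ->
  forall u, U u -> exists c, C_phi d a phi c /\ U c /\ c <= u.
Proof.
move=> phi Hphi u Uu.
case: HU => [[UT [U0 [Uup [Umeet Ucmp]]]] Hcoh].
case: Ha_max => [Ha0 [Hadisj Hamax]].
have Unot : forall x, ~ U x -> U (Order.compl x).
  by move=> x nx; case: (Ucmp x).
have adisj : forall i j, i <> j -> Order.meet (a i) (a j) = \bot.
  move=> i j ij; apply: Hadisj; [by exists i|by exists j| by move/Ha_inj].
have ale : forall i j, i <> j -> a i <= Order.compl (a j).
  by move=> i j /adisj /eqP; rewrite disj_leC.
pose sup (S : set T) := proj1_sig (cid (HT_complete S)).
have supP : forall S, is_sup S (sup S).
  by move=> S; exact: (proj2_sig (cid (HT_complete S))).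
pose G k := d k != \bot /\ (exists i, d k <= a i) /\ (d k <= u \/ d k <= Order.compl u).
pose R j k := Order.meet (d j) (d k) = \bot.
pose sel k := k \in greedy G R k.+1.
have memg : forall j k, (j \in greedy G R k) = (j < k)%N && sel j.
  by move=> j k; rewrite greedyE /sel greedyE ltnSn.
have selE : forall k, sel k -> G k /\ forall j, (j < k)%N -> sel j -> R j k.
  move=> k; rewrite /sel greedyE ltnSn /= => /asboolP [Gk H]; split=> // j jk sj.
  by apply: H; rewrite memg jk /=.
have selN : forall k, G k -> ~ sel k -> exists j, [/\ (j < k)%N, sel j & ~ R j k].
  move=> k Gk nsel; apply: contrapT => hno; apply: nsel.
  rewrite /sel greedyE ltnSn /=; apply/asboolP; split=> // j.
  rewrite memg => /andP [jk sj]; apply: contrapT => nR; apply: hno; exists j; split=> //.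
pose P p := exists k, sel k /\ p = d k.
have Pmax : max_antichain P.
  split; [|split].
  - by move=> p [k [sk ->]]; case: (selE k sk) => [[]].
  - move=> p q [j [sj ->]] [k [sk ->]] pq.
    case: (ltngtP j k) => h.
    + exact: (selE k sk).2 j h sj.
    + rewrite meetC; exact: (selE j sj).2 k h sk.
    + by case: pq; rewrite h.
  - move=> x x0; case: (Hamax x x0) => _ [i _ <-] hi.
    set z := Order.meet x (a i).
    have [w [w0 [wz wuu]]] : exists w, w != \bot /\ w <= z /\ (w <= u \/ w <= Order.compl u).
      case: (boolP (Order.meet z u == \bot)) => hu.
      + exists (Order.meet z (Order.compl u)); split; last by split; [exact: leIl|right; exact: leIr].
        apply/eqP => e; move: hi; rewrite -/z (split0 (eqP hu) e) eqxx //.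
      + exists (Order.meet z u); split => //; split; [exact: leIl|left; exact: leIr].
    case: (Hd_dense w w0) => y [k _ <-] [k0 kw].
    have kz : d k <= z by exact: le_trans kw wz.
    have kx : d k <= x by exact: le_trans kz (leIl _ _).
    have Gk : G k.
      split; first by rewrite -lt0x.
      split; first by exists i; exact: le_trans kz (leIr _ _).
      by case: wuu => h; [left|right]; exact: le_trans kw h.
    case: (boolP (sel k)) => sk.
    + exists (d k); first by exists k.
      by rewrite meetC (meet_idPl kx) -lt0x.
    + case: (selN k Gk (negP sk)) => j [jk sj nR].
      exists (d j); first by exists j.
      apply/eqP => e; apply: nR; apply/eqP; rewrite -lex0 -e meetC.
      exact: leI2 kx (lexx _).
have Pnz : forall p, P p -> p != \bot by case: Pmax.
have PG : forall p, P p -> (exists i, p <= a i) /\ (p <= u \/ p <= Order.compl u).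
  by move=> p [k [sk ->]]; case: (selE k sk) => [[_ h] _].
have nAU : forall n, U (nA a n).
  elim=> [//|n IH] /=; apply: (Umeet) => //; exact: Unot.
pose X n := fun p => P p /\ p <= u /\ exists i, (n <= i)%N /\ p <= a i.
have HX : forall n, (forall x, X n x -> P x) /\ join_in U (X n).
  move=> n; split; first by move=> x [].
  exists (sup (X n)); split => //.
  apply: contrapT => ns.
  set z := Order.meet (Order.meet (Order.compl (sup (X n))) u) (nA a n).
  have Uz : U z by apply: (Umeet); [apply: (Umeet) => //; exact: Unot|].
  have z0 : z != \bot by apply/eqP => e; apply: U0; rewrite -e.
  case: Pmax => _ [_ Pm]; case: (Pm z z0) => p Pp; apply/negP; rewrite negbK.
  case: (PG p Pp) => [[i hi] [hu|hu]].
  - case: (leqP n i) => ni.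
    + apply/eqP; apply: (@disjW _ _ z (sup (X n)) p); first by rewrite /z -meetA; exact: leIl.
      by apply: (supP (X n)).1; split=> //; split=> //; exists i.
    + by apply/eqP; apply: (@disjW _ _ z (a i) p) hi; rewrite /z; apply: le_trans _ (@nA_le _ _ a n i ni); exact: leIr.
  - apply/eqP; rewrite meetC; apply: (@disjW _ _ p u z hu).
    by rewrite /z -meetA; apply: le_trans (leIr _ _) _; exact: leIl.
case: (Hcoh P X Pmax HX) => Y [YP [[y [ysup Uy]] Yfin]].
pose GQ (Q : nat -> Prop) := fun p => Y p /\ p <= u /\ exists i, Q i /\ p <= a i.
pose cQ Q := sup (GQ Q).
pose ci i := cQ (fun j => j = i).
have Pa : forall p i j, P p -> p <= a i -> p <= a j -> i = j.
  move=> p i j Pp pi pj; apply: contrapT => ij.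
  have : p <= \bot by rewrite -(adisj i j ij) lexI pi pj.
  by rewrite lex0 (negbTE (Pnz p Pp)).
have K1 : forall Q i, Order.meet (a i) (cQ Q) <= ci i.
  move=> Q i.
  have h : cQ Q <= Order.join (ci i) (Order.compl (a i)).
    apply: (supP (GQ Q)).2 => p [Yp [pu [j [Qj pj]]]].
    have [eji|ne] := eqVneq j i.
    - subst j; apply: le_trans (leUl _ _); apply: (supP _).1; split=> //; split=> //; exists i; split=> //.
    - apply: le_trans (leUr _ _); apply: le_trans pj (ale j i _); exact/eqP.
  apply: le_trans (leI2 (lexx (a i)) h) _.
  rewrite meetUr meetxC joinx0; exact: leIr.
have K2 : forall (Q : nat -> Prop) i, ~ Q i -> Order.meet (a i) (cQ Q) = \bot.
  move=> Q i nQ; apply/eqP; rewrite meetC disj_leC.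
  apply: (supP (GQ Q)).2 => p [Yp [pu [j [Qj pj]]]].
  apply: le_trans pj (ale j i _) => e; apply: nQ; rewrite -e; exact: Qj.
have K3 : forall (Q : nat -> Prop) i, Q i -> ci i <= Order.meet (a i) (cQ Q).
  move=> Q i Qi; apply: (supP _).2 => p [Yp [pu [j [-> pj]]]].
  rewrite lexI pj /=; apply: (supP _).1; split=> //; split=> //; exists i; split=> //.
have Kc : forall (Q : nat -> Prop) i, Q i -> Order.meet (a i) (cQ Q) = ci i.
  by move=> Q i Qi; apply: le_anti; rewrite K1 K3.
have Kle : forall Q, cQ Q <= u.
  by move=> Q; apply: (supP _).2 => p [_ [pu _]].
have ci_range : forall i, range d (ci i).
  move=> i; apply: (sup_range Hd_sub _ _ (supP _)).
  - apply: sub_finite_set (Yfin i.+1) => p [Yp [pu [j [-> pj]]]]; split=> // - [Pp [_ [j' [ij' pj']]]].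
    by move: ij'; rewrite (Pa p i j' Pp pj pj') ltnn.
  - move=> p [Yp _]; case: (YP p Yp) => k [_ ->]; by exists k.
have fP : forall i, {k | d k = ci i}.
  by move=> i; case: (cid2 (ci_range i)) => k _ e; exists k.
pose f i := proj1_sig (fP i).
have fE : forall i, d (f i) = ci i by move=> i; exact: (proj2_sig (fP i)).
pose g := gmax f.
pose ns := nsq g phi.
pose h t := phi (ns t).
have nsinc : forall t, (ns t < ns t.+1)%N by move=> t; rewrite /ns /=; lia.
have hinc : forall t, (h t < h t.+1)%N by move=> t; apply: sinc_lt Hphi _ _ (nsinc t).
have hgap : forall t, (g (h t) < h t.+1)%N.
  move=> t; apply: leq_trans (sinc_id Hphi (ns t.+1)); rewrite /h /ns /=; lia.
have hid : forall t, (t <= h t)%N := sinc_id hinc.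
pose Q (b : nat) (i : nat) :=
  (exists s, (h (2*s+b) <= i < h (2*s+b).+1)%N) \/ (b = 0%N /\ (i < h 0)%N).
have cover : forall i, Q 0%N i \/ Q 1%N i.
  move=> i.
  have ex : exists t, (i < h t)%N by exists i.+1; exact: leq_trans (ltnSn i) (hid i.+1).
  case: (ex_minnP ex) => t ht tmin.
  case: t ht tmin => [|t] ht tmin; first by left; right.
  have ht' : (h t <= i)%N by rewrite leqNgt; apply/negP => /tmin; rewrite ltnn.
  have e := odd_double_half t.
  case: (odd t) e => /= e; rewrite -muln2 in e.
  - right; left; exists t./2.
    have -> : (2 * t./2 + 1 = t)%N by lia.
    by rewrite ht' ht.
  - left; left; exists t./2.
    have -> : (2 * t./2 + 0 = t)%N by lia.
    by rewrite ht' ht.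
have Hkey : forall b j i, (b <= 1)%N -> Q b i -> (i < h (2*j+2-b))%N -> (i < h (2*j+1-b))%N.
  move=> b j i b1 [[s /andP [h1 h2]] | [-> h0]] hi.
  - have lt : (2*s+b < 2*j+2-b)%N.
      rewrite ltnNge; apply/negP => le; have := sinc_le hinc le; lia.
    apply: leq_trans h2 _; apply: (sinc_le hinc); lia.
  - apply: leq_trans h0 _; apply: (sinc_le hinc); lia.
have Hf : forall b j i, (b <= 1)%N -> Q b i -> (i < h (2*j+2-b))%N -> (f i < h (2*j+2-b))%N.
  move=> b j i b1 q hi.
  have e : (2*j+2-b = (2*j+1-b).+1)%N by lia.
  rewrite e; apply: leq_ltn_trans (hgap _).
  apply: leq_trans (gmax_ge f i) _; apply: gmax_mono; apply: ltnW; exact: Hkey b j i b1 q hi.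
have [b [b1 Uc]] : exists b, (b <= 1)%N /\ U (cQ (Q b)).
  apply: contrapT => hn.
  have n0 : ~ U (cQ (Q 0%N)) by move=> h0; apply: hn; exists 0%N.
  have n1 : ~ U (cQ (Q 1%N)) by move=> h0; apply: hn; exists 1%N.
  set z := Order.meet (Order.meet y u)
     (Order.meet (Order.compl (cQ (Q 0%N))) (Order.compl (cQ (Q 1%N)))).
  have Uz : U z.
    apply: (Umeet); first exact: (Umeet).
    apply: (Umeet); [exact: (Unot _ n0)|exact: (Unot _ n1)].
  have zy : z <= Order.compl y.
    rewrite lexC; apply: ysup.2 => p Yp; rewrite lexC.
    case: (PG p (YP p Yp)) => [[i hi] [hu|hu]].
    - case: (cover i) => q.
      + have : p <= cQ (Q 0%N) by apply: (supP _).1; split=> //; split=> //; exists i.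
        rewrite -leC => hc; apply: le_trans hc.
        by rewrite /z; apply: le_trans (leIr _ _) _; exact: leIl.
      + have : p <= cQ (Q 1%N) by apply: (supP _).1; split=> //; split=> //; exists i.
        rewrite -leC => hc; apply: le_trans hc.
        by rewrite /z; apply: le_trans (leIr _ _) _; exact: leIr.
    - apply: (@le_trans _ _ u); last by rewrite lexC.
      by rewrite /z; apply: le_trans (leIl _ _) _; exact: leIr.
  have : z <= \bot.
    rewrite -(meetxC y) lexI zy andbT.
    by rewrite /z; apply: le_trans (leIl _ _) _; exact: leIl.
  by rewrite lex0 => /eqP ez; apply: U0; rewrite -ez.
exists (cQ (Q b)); split; last by split=> //; exact: Kle.
exists (fun j => ns (2*j+2-b)%N); split.
  by move=> j; apply: (sinc_lt nsinc); lia.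
move=> j i hi.
have [q|nq] := pselect (Q b i).
- exists (f i); first exact: Hf b j i b1 q hi.
  by rewrite Kc // fE.
- exists 0%N; first exact: leq_ltn_trans (leq0n i) hi.
  by rewrite K2 // Hd0.
Qed.
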